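(* Let $(\Omega,\mathcal F,\mathbb P)$ be either an atomless probability space or the equiprobable space $(\{1,\dots,m\},2^{\{1,\dots,m\}},\mathbb P)$ with $\mathbb P(\{k\})=1/m$. Let $\mathcal P_1,\dots,\mathcal P_n$ be nonempty sets of probability measures on $(\Omega,\mathcal F)$, all absolutely continuous with respect to $\mathbb P$, and let $\alpha_1,\dots,\alpha_n\in(0,1)$. Fix a bounded measurable $X$. Suppose that $\mathrm d\mathbb Q/\mathrm d\mathbb P$ is decreasing in $X$ for every $\mathbb Q\in\mathcal P_1$ and increasing in $X$ for every $\mathbb Q\in\mathcal P_i$, $i=2,\dots,n$. Let $x^*=\mathop{\square}_{i=1}^n\sup_{\mathbb Q\in\mathcal P_i}\mathrm{VaR}^{\mathbb Q}_{\alpha_i}(X)$ and suppose the optimal allocation exists in the sense that $x^*>-\infty$ and there is $(A_1,\dots,A_n)\in\Pi_n$ with $\sup_{\mathbb Q\in\mathcal P_i}\mathbb Q(A_i\cap\{X>x^*\})\le\alpha_i$ for all $i$ (so that $X_i=(X-x^* )\mathds 1_{A_i}+x^*/n$ is an optimal allocation). Then such an optimal composition $(A_1^*,\dots,A_n^* )\in\Pi_n$ can be chosen so that $A_1^*$ is a tail event of $X$, meaning $X(\omega)\ge X(\omega')$ for all $\omega\in A_1^*$ and $\omega'\notin A_1^*$.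
   Context: For a probability $\mathbb Q$ and $\alpha\in(0,1)$, $\mathrm{VaR}^{\mathbb Q}_\alpha(X)=\inf\{x\in\mathbb R:\mathbb Q(X\ge x)\le\alpha\}$. Inf-convolution: $\mathop{\square}_{i=1}^n\rho_i(X)=\inf\{\sum_i\rho_i(X_i): X_i$ bounded measurable, $\sum_iX_i=X\}$. $\Pi_n=\{(A_1,\dots,A_n)\in\mathcal F^n:\bigcup_iA_i=\Omega\}$. ''$\mathrm d\mathbb Q/\mathrm d\mathbb P$ is decreasing (resp. increasing) in $X$'' means the Radon–Nikodym density is a decreasing (resp. increasing) function of $X$. *)

(* Defs.v *)
From HB Require Import structures.
From mathcomp Require Import all_boot all_order all_algebra.
From mathcomp Require Import all_classical all_reals all_analysis.
Set Implicit Arguments. Unset Strict Implicit. Unset Printing Implicit Defensive.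
Import Order.TTheory GRing.Theory Num.Theory.
Local Open Scope classical_set_scope.
Local Open Scope ring_scope.

Section defs.
Context {d : measure_display} {T : measurableType d} {R : realType}.

Definition atomless (P : probability T R) : Prop :=
  forall A : set T, measurable A -> (0 < P A)%E ->
    exists B : set T, [/\ measurable B, B `<=` A, (0 < P B)%E & (P B < P A)%E].

Definition equiprobable (P : probability T R) : Prop :=
  exists m : nat, [/\ exists e : 'I_m -> T, bijective e,
    forall A : set T, measurable A &
    forall w : T, P [set w] = ((m%:R)^-1)%:E].

Definition VaR (Q : probability T R) (a : R) (Y : T -> R) : \bar R :=
  ereal_inf [set x%:E | x in [set x : R | (Q [set w | (x <= Y w)%R] <= a%:E)%E]].

Definition rhoVaR (Ps : set (probability T R)) (a : R) (Y : T -> R) : \bar R :=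
  ereal_sup [set VaR Q a Y | Q in Ps].

Definition bounded_mfun (Y : T -> R) : Prop :=
  measurable_fun setT Y /\ exists M : R, forall w, `|Y w| <= M.

Definition infconv (n : nat) (rho : 'I_n -> (T -> R) -> \bar R) (X : T -> R)
  : \bar R :=
  ereal_inf [set (\sum_(i < n) rho i (Xs i))%E | Xs in
     [set Xs : 'I_n -> T -> R | (forall i, bounded_mfun (Xs i)) /\
                                forall w, \sum_(i < n) Xs i w = X w]].

Definition Pi_n (n : nat) (A : 'I_n -> set T) : Prop :=
  (forall i, measurable (A i)) /\ forall w : T, exists i, A i w.

(* dQ/dP admits a version that is a decreasing (resp. increasing)
   function of X: f w = h (X w) with h nonincreasing (resp. nondecreasing)
   on the range of X. *)
Definition density_of (P Q : probability T R) (f : T -> R) : Prop :=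
  [/\ measurable_fun setT f, forall w, 0 <= f w &
      forall A, measurable A -> Q A = (\int[P]_(w in A) (f w)%:E)%E].

Definition density_decreasing_in (P Q : probability T R) (X : T -> R) : Prop :=
  exists f, density_of P Q f /\ forall w w', X w <= X w' -> f w' <= f w.

Definition density_increasing_in (P Q : probability T R) (X : T -> R) : Prop :=
  exists f, density_of P Q f /\ forall w w', X w <= X w' -> f w <= f w'.

Definition tail_event (X : T -> R) (A : set T) : Prop :=
  forall w w', A w -> ~ A w' -> X w' <= X w.

End defs.

(* Main.v *)
Require Import Defs.
From HB Require Import structures.
From mathcomp Require Import all_boot all_order all_algebra.
From mathcomp Require Import all_classical all_reals all_analysis.
Import Order.TTheory GRing.Theory Num.Theory.
Local Open Scope classical_set_scope.
Local Open Scope ring_scope.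
From mathcomp Require Import measurable_realfun.
From mathcomp Require Import zify.
From mathcomp Require Import lra.
Section basic.
Context {d : measure_display} {T : measurableType d} {R : realType}.
Implicit Types (Q : probability T R) (A B : set T).

Lemma muE Q A : measurable A -> Q A = (fine (Q A))%:E.
Proof. by move=> mA; rewrite fineK // fin_num_measure. Qed.

Lemma mu_ge0 Q A : 0 <= fine (Q A).
Proof. exact: fine_ge0. Qed.

Lemma mu_le1 Q A : measurable A -> fine (Q A) <= 1.
Proof. by move=> mA; rewrite -lee_fin -muE //; exact: probability_le1. Qed.

Lemma mu_le Q A B : measurable A -> measurable B -> A `<=` B -> fine (Q A) <= fine (Q B).
Proof. by move=> mA mB AB; rewrite -lee_fin -!muE //; apply: le_measure; rewrite ?inE. Qed.

Lemma mu_U Q A B : measurable A -> measurable B -> A `&` B = set0 ->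
  fine (Q (A `|` B)) = fine (Q A) + fine (Q B).
Proof.
move=> mA mB AB; apply/EFin_inj; rewrite -muE; last exact: measurableU.
by rewrite measureU // EFinD -!muE.
Qed.

Lemma mu_U2 Q A B : measurable A -> measurable B ->
  fine (Q (A `|` B)) <= fine (Q A) + fine (Q B).
Proof.
move=> mA mB; rewrite -lee_fin -muE; last exact: measurableU.
by rewrite EFinD -!muE //; apply: measureU2.
Qed.

Lemma mu_D Q A B : measurable A -> measurable B -> B `<=` A ->
  fine (Q (A `\` B)) = fine (Q A) - fine (Q B).
Proof.
move=> mA mB BA; have E : A = (A `\` B) `|` B by rewrite setUC setDUK.
have -> : fine (Q A) = fine (Q (A `\` B)) + fine (Q B).
  rewrite {1}E mu_U //; first exact: measurableD.
  by rewrite setDE -setIA setICl setI0.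
by rewrite addrK.
Qed.

Lemma mu_D' Q A B : measurable A -> measurable B ->
  fine (Q (A `\` B)) = fine (Q A) - fine (Q (A `&` B)).
Proof.
move=> mA mB; have -> : A `\` B = A `\` (A `&` B).
  by apply/seteqP; split => w [Uw nV]; split => //; [move=> [] | move=> Vw; apply: nV].
by apply: mu_D => //; first exact: measurableI.
Qed.

Lemma mu0 Q : fine (Q set0) = 0.
Proof. by rewrite measure0. Qed.

Lemma mu_bigcup_le Q (F : nat -> set T) r : (forall k, measurable (F k)) ->
  (forall k, F k `<=` F k.+1) -> (forall k, fine (Q (F k)) <= r) ->
  fine (Q (\bigcup_k F k)) <= r.
Proof.
move=> mF ndF Fr.
have mU : measurable (\bigcup_k F k) by exact: bigcupT_measurable.
have nd : nondecreasing_seq F.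
  by apply/nondecreasing_seqP => k; apply/subsetPset; exact: ndF.
have h := nondecreasing_cvg_mu (mu := Q) mF mU nd.
rewrite -lee_fin -muE // -(cvg_lim _ h) //.
apply: lime_le; first by apply/cvg_ex; eexists; exact: h.
by apply: nearW => k /=; rewrite muE // lee_fin.
Qed.

End basic.
Section cmp.
Context {d : measure_display} {T : measurableType d} {R : realType}.
Local Open Scope ereal_scope.

Lemma dens_cmp (P Q : probability T R) f (E F : set T) : density_of P Q f ->
  measurable E -> measurable F -> (forall e w, E e -> F w -> (f e <= f w)%R) ->
  (fine (P E) <= fine (P F))%R -> (fine (Q E) <= fine (Q F))%R.
Proof.
move=> [mf f0 QE] mE mF fEF PEF.
have mf' : measurable_fun setT (EFin \o f : T -> \bar R) by exact/measurable_EFinP.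
have mfD D : measurable D -> measurable_fun D (fun w => (f w)%:E).
  by move=> mD; exact: measurable_funS mf'.
have [[w0 Fw0]|F0] := pselect (exists w, F w); last first.
  have F0' : F = set0 by apply/seteqP; split => // w Fw; apply: F0; exists w.
  have PE0 : P E = 0.
    apply/le_anti; rewrite measure_ge0 andbT (muE P E mE) lee_fin.
    by rewrite (le_trans PEF) // F0' measure0.
  rewrite QE // null_set_integral //=; last exact: mfD.
  exact: mu_ge0.
set s := inf [set f w | w in F].
have neF : [set f w | w in F] !=set0 by exists (f w0), w0.
have s0 : (0 <= s)%R by apply: lb_le_inf => // _ [w _ <-].
have sE e : E e -> (f e <= s)%R.
  by move=> Ee; apply: lb_le_inf => // _ [w Fw <-]; exact: fEF.
have sF w : F w -> (s <= f w)%R.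
  move=> Fw; apply: ge_inf; last by exists w.
  by exists 0%R => _ [w' _ <-].
rewrite -lee_fin -!muE // !QE //.
apply: (@le_trans _ _ (\int[P]_(w in E) (cst s%:E) w)).
  apply: ge0_le_integral => //.
  all: try first [ by move=> x _; rewrite lee_fin ?f0
             | exact: mfD | exact: measurable_cst
             | by move=> x Ex; rewrite lee_fin ?sE ?sF ].
apply: (@le_trans _ _ (\int[P]_(w in F) (cst s%:E) w)).
  have PEF' : P E <= P F by rewrite (muE P E mE) (muE P F mF) lee_fin.
  rewrite !integral_cst //; apply: lee_wpmul2l; first by rewrite lee_fin.
  exact: PEF'.
apply: ge0_le_integral => //.
  all: try first [ by move=> x _; rewrite lee_fin ?f0
             | exact: mfD | exact: measurable_cst
             | by move=> x Ex; rewrite lee_fin ?sE ?sF ].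
Qed.
End cmp.
Section multisplit.
Context {d : measure_display} {T : measurableType d} {R : realType}.

Definition splittable (P : probability T R) := forall S E : set T,
  measurable S -> measurable E -> fine (P E) <= fine (P S) ->
  exists G, [/\ measurable G, G `<=` S & fine (P G) = fine (P E)].

Lemma multisplit (P : probability T R) (spl : splittable P) (E : nat -> set T) :
  (forall j, measurable (E j)) -> forall k (F : set T), measurable F ->
  fine (P F) <= fine (P [set w | exists2 j, (j <= k)%N & E j w]) ->
  exists G : nat -> set T,
    (forall j, [/\ measurable (G j), G j `<=` F & fine (P (G j)) <= fine (P (E j))]) /\
    (forall w, F w -> exists2 j, (j <= k)%N & G j w).
Proof.
move=> mE.
have mU k : measurable [set w | exists2 j, (j <= k)%N & E j w].
  have -> : [set w | exists2 j, (j <= k)%N & E j w] =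
      \bigcup_(j in [set j | (j <= k)%N]) E j.
    by apply/seteqP; split => w [j jk Ejw]; exists j.
  by apply: bigcup_measurable => j _; exact: mE.
elim=> [|k IH] F mF hF.
  exists (fun j => if j == 0%N then F else set0); split; last first.
    by move=> w Fw; exists 0%N => //; rewrite eqxx.
  move=> j; case: eqP => [->|_]; split => //.
  - apply: le_trans hF _; apply: mu_le => //.
    by move=> w [[|i] //= _ Ew].
  - by rewrite mu0 mu_ge0.
have UE : [set w | exists2 j, (j <= k.+1)%N & E j w] =
    [set w | exists2 j, (j <= k)%N & E j w] `|` E k.+1.
  apply/seteqP; split => w.
    move=> [j]; rewrite leq_eqVlt => /orP[/eqP ->|jk Ew]; first by right.
    by left; exists j.
  by move=> [[j jk Ew]|Ew]; [exists j => //; exact: leqW|exists k.+1].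
have [h|h] := lerP (fine (P F)) (fine (P (E k.+1))).
  exists (fun j => if j == k.+1 then F else set0); split; last first.
    by move=> w Fw; exists k.+1 => //; rewrite eqxx.
  move=> j; case: eqP => [->|_]; split => //.
  by rewrite mu0 mu_ge0.
have [H [mH HF PH]] := spl F (E k.+1) mF (mE _) (ltW h).
have hF' : fine (P (F `\` H)) <= fine (P [set w | exists2 j, (j <= k)%N & E j w]).
  rewrite mu_D // PH lerBlDr; apply: (le_trans hF).
  by rewrite UE; apply: mu_U2 => //; exact: mU.
have [G' [G'p G'c]] := IH (F `\` H) (measurableD mF mH) hF'.
exists (fun j => if j == k.+1 then H else G' j); split.
  move=> j; case: eqP => [->|_]; first by split => //; rewrite PH.
  have [? G'F ?] := G'p j; split => // w /G'F [].
  by [].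
move=> w Fw; have [Hw|Hw] := pselect (H w).
  by exists k.+1 => //; rewrite eqxx.
have [j jk G'w] := G'c w (conj Fw Hw).
exists j; first exact: leqW.
by rewrite ltn_eqF // ltnS.
Qed.
End multisplit.
Section threshold.
Context {d : measure_display} {T : measurableType d} {R : realType}.

Lemma inv_lt_ex (e : R) : 0 < e -> exists n : nat, n.+1%:R^-1 < e.
Proof.
move=> e0; have [k hk] : exists k : nat, e^-1 < k%:R.
  by eexists; apply: archi_boundP; rewrite invr_ge0 ltW.
exists k; rewrite invf_plt ?posrE ?ltr0Sn ?invr_gt0 //.
by apply: (lt_le_trans hk); rewrite ler_nat.
Qed.

Lemma tail_exists (P : probability T R) (spl : splittable P) (X : T -> R)
    (B D : set T) :
  measurable_fun setT X -> (exists M, forall w, `|X w| <= M) ->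
  measurable B -> tail_event X B -> measurable D -> D `<=` B ->
  exists C, [/\ measurable C, C `<=` B, tail_event X C &
                fine (P C) = fine (P D)].
Proof.
move=> mX [M hM] mB tB mD DB.
have mXp (I : set R) : measurable I -> measurable (X @^-1` I).
  by move=> mI; rewrite -[X @^-1` I]setTI; exact: mX.
have mge s : measurable [set w | s <= X w].
  have -> : [set w | s <= X w] = X @^-1` `[s, +oo[%classic.
    by apply/seteqP; split => w /=; rewrite in_itv /= andbT.
  by apply: mXp; exact: measurable_itv.
have mgt s : measurable [set w | s < X w].
  have -> : [set w | s < X w] = X @^-1` `]s, +oo[%classic.
    by apply/seteqP; split => w /=; rewrite in_itv /= andbT.
  by apply: mXp; exact: measurable_itv.
have mBge s : measurable (B `&` [set w | s <= X w]) by exact: measurableI.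
have mBgt s : measurable (B `&` [set w | s < X w]) by exact: measurableI.
set p := fine (P D).
have [p0|p0] := lerP p 0.
  exists set0; split => //; last by rewrite mu0; apply/eqP; rewrite eq_le p0 mu_ge0.
pose g s := fine (P (B `&` [set w | s <= X w])).
have gmono s1 s2 : s1 <= s2 -> g s2 <= g s1.
  move=> s12; apply: mu_le => // w [Bw sw]; split => //; exact: le_trans sw.
pose S := [set s | p <= g s].
have SM : S (- M).
  rewrite /S /= /g /p; apply: mu_le => // w Dw.
  split; first exact: DB.
  by rewrite /= lerNl; apply: le_trans (hM w); rewrite -normrN ler_norm.
have Sub : ubound S M.
  move=> s Ss; rewrite leNgt; apply/negP => Ms.
  suff : g s = 0 by move=> g0; move: Ss; rewrite /S /= g0 => /(lt_le_trans p0); rewrite ltxx.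
  rewrite /g; have -> : B `&` [set w | s <= X w] = set0.
    apply/seteqP; split => // w [_ /= sw]; move: (le_trans (ler_norm _) (hM w)).
    by move=> XM; have := lt_le_trans Ms sw; rewrite ltNge XM.
  by rewrite mu0.
have hS : has_sup S by split; [exists (- M)|exists M].
set t := sup S.
have hV : p <= fine (P (B `&` [set w | t <= X w])).
  have mBlt s : measurable (B `\` [set w | s <= X w]) by exact: measurableD.
  have EU : B `\` (B `&` [set w | t <= X w]) =
      \bigcup_n (B `\` [set w | t - n.+1%:R^-1 <= X w]).
    apply/seteqP; split => w.
      move=> [Bw /not_andP [//|]] /negP; rewrite -ltNge => Xt.
      have tX0 : 0 < t - X w by rewrite subr_gt0.
      have [n hn] := inv_lt_ex _ tX0.
      exists n => //; split => //=; apply/negP; rewrite -ltNge ltrBrDl.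
      by rewrite -ltrBrDr.
    move=> [n _ [Bw /negP]]; rewrite -ltNge => Xt; split => // -[_ /= tX].
    have : t - n.+1%:R^-1 < t by rewrite ltrBlDr ltrDl invr_gt0 ltr0Sn.
    by move=> h; have := lt_le_trans (lt_trans Xt h) tX; rewrite ltxx.
  have : fine (P (B `\` (B `&` [set w | t <= X w]))) <= fine (P B) - p.
    rewrite EU; apply: mu_bigcup_le => //.
      move=> n w [Bw nX]; split => // sX; apply: nX; apply: le_trans sX.
      by rewrite lerD2l lerN2 lef_pV2 ?posrE ?ltr0Sn // ler_nat.
    move=> n; have n0 : 0 < n.+1%:R^-1 :> R by rewrite invr_gt0 ltr0Sn.
    have [s Ss hs] := sup_adherent n0 hS.
    have hg : p <= g (t - n.+1%:R^-1) by apply: (le_trans Ss); apply: gmono; exact: ltW.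
    have -> : B `\` [set w | t - n.+1%:R^-1 <= X w] =
        B `\` (B `&` [set w | t - n.+1%:R^-1 <= X w]).
      by rewrite setDIr setDv set0U.
    rewrite mu_D //; try exact: subIsetl.
    by rewrite lerD2l lerN2.
  rewrite mu_D //; try exact: subIsetl.
  by rewrite lerD2l lerN2.
have hU : fine (P (B `&` [set w | t < X w])) <= p.
  have EU : B `&` [set w | t < X w] =
      \bigcup_n (B `&` [set w | t + n.+1%:R^-1 <= X w]).
    apply/seteqP; split => w.
      move=> [Bw /= Xt].
      have tX0 : 0 < X w - t by rewrite subr_gt0.
      have [n hn] := inv_lt_ex _ tX0.
      by exists n => //; split => //=; rewrite -lerBrDl ltW.
    move=> [n _ [Bw /= tX]]; split => //=; apply: lt_le_trans tX.
    by rewrite ltrDl invr_gt0 ltr0Sn.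
  rewrite EU; apply: mu_bigcup_le => //.
    move=> n w [Bw nX]; split => //=; apply: le_trans nX.
    by rewrite lerD2l lef_pV2 ?posrE ?ltr0Sn // ler_nat.
  move=> n; rewrite leNgt; apply/negP => hn.
  have : t + n.+1%:R^-1 <= t by apply: sup_upper_bound => //; exact: ltW.
  by rewrite gerDl leNgt invr_gt0 ltr0Sn.
set U := B `&` [set w | t < X w].
set V := B `&` [set w | t <= X w].
have UV : U `<=` V by move=> w [Bw /= /ltW].
have [U' [mU' U'D PU']] := spl D U mD (mBgt t) (le_trans hU (lexx _)).
have mE' : measurable (D `\` U') by exact: measurableD.
have PE' : fine (P (D `\` U')) <= fine (P (V `\` U)).
  rewrite !mu_D //; try exact: mBge; try exact: mBgt.
  by rewrite PU' lerD2r.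
have [W [mW WVU PW]] := spl (V `\` U) (D `\` U') (measurableD (mBge t) (mBgt t)) mE' PE'.
exists (U `|` W); split.
- by apply: measurableU => //; exact: mBgt.
- by move=> w [[]|/WVU [[]]].
- move=> w w' Cw Cw'.
  have Xw : t <= X w by case: Cw => [[_ /= /ltW]|/WVU [[_]]].
  have Bw : B w by case: Cw => [[]|/WVU [[]]].
  have [Bw'|Bw'] := pselect (B w'); last exact: tB Bw Bw'.
  apply: le_trans Xw; rewrite leNgt; apply/negP => tw'.
  by apply: Cw'; left.
- rewrite mu_U //; last first.
    by apply/seteqP; split => // w [Uw /WVU [_]].
    exact: mBgt.
  rewrite PW mu_D // PU' /p; first by rewrite addrC subrK.
Qed.
End threshold.
Section mainsec.
Context {d : measure_display} {T : measurableType d} {R : realType}.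

Lemma mB_gen (X : T -> R) (z : \bar R) : measurable_fun setT X ->
  measurable [set w | (z < (X w)%:E)%E].
Proof.
move=> mX; case: z => [r| |].
- have -> : [set w | (r%:E < (X w)%:E)%E] = X @^-1` `]r, +oo[%classic.
    by apply/seteqP; split => w /=; rewrite in_itv /= andbT lte_fin.
  by rewrite -[X @^-1` _]setTI; apply: mX => //; exact: measurable_itv.
- have -> : [set w | (+oo < (X w)%:E)%E] = set0 by apply/seteqP; split => // w /=.
  exact: measurable0.
- have -> : [set w | (-oo < (X w)%:E)%E] = setT.
    by apply/seteqP; split => // w _ /=; rewrite ltNye.
  exact: measurableT.
Qed.

Lemma tB_gen (X : T -> R) (z : \bar R) : tail_event X [set w | (z < (X w)%:E)%E].
Proof.
move=> w w' /= zw zw'; rewrite -lee_fin; apply/ltW/(le_lt_trans _ zw).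
by rewrite leNgt; apply/negP.
Qed.

Lemma sup_le_trans (Ps : set (probability T R)) (S1 S2 : set T) (a : \bar R) :
  (forall Q, Ps Q -> (Q S1 <= Q S2)%E) ->
  (ereal_sup [set Q S2 | Q in Ps] <= a)%E ->
  (ereal_sup [set Q S1 | Q in Ps] <= a)%E.
Proof.
move=> h12 h; apply: le_trans h; apply: ge_ereal_sup => _ [Q PQ <-].
apply: le_trans (h12 _ PQ) _; apply: ereal_sup_ubound; by exists Q.
Qed.

Lemma main_split (P : probability T R) (spl : splittable P) (n : nat) (hn : (0 < n)%N)
  (Ps : 'I_n -> set (probability T R)) (alpha : 'I_n -> R) (X : T -> R) (z : \bar R) :
  bounded_mfun X ->
  (forall i Q, Ps i Q -> val i = 0%N -> density_decreasing_in P Q X) ->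
  (forall i Q, Ps i Q -> val i <> 0%N -> density_increasing_in P Q X) ->
  (exists A : 'I_n -> set T, Pi_n A /\
     forall i, (ereal_sup [set Q (A i `&` [set w | z < (X w)%:E]) | Q in Ps i]
                <= (alpha i)%:E)%E) ->
  exists A : 'I_n -> set T, [/\ Pi_n A,
     forall i, (ereal_sup [set Q (A i `&` [set w | z < (X w)%:E]) | Q in Ps i]
                <= (alpha i)%:E)%E &
     forall i, val i = 0%N -> tail_event X (A i)].
Proof.
move=> [mX [M hM]] hdec hinc [A [[mA covA] hA]].
set B := [set w | (z < (X w)%:E)%E].
have mB : measurable B by exact: mB_gen.
have tB : tail_event X B by exact: tB_gen.
have [n1|n2] := leqP n 1.
  exists A; split => // i i0 w w' _ Aw'; exfalso; apply: Aw'.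
  have [j Ajw'] := covA w'; suff -> : i = j by [].
  apply: val_inj; rewrite i0; apply/eqP; rewrite eq_sym -leqn0 -ltnS.
  exact: leq_trans (ltn_ord j) n1.
have eqD (U V : set T) : U `\` V = U `\` (U `&` V).
  by apply/seteqP; split => w [Uw nV]; split => //; [move=> [] | move=> Vw; apply: nV].
have mU k (Ej : nat -> set T) : (forall j, measurable (Ej j)) ->
    measurable [set w | exists2 j, (j <= k)%N & Ej j w].
  move=> mEj; have -> : [set w | exists2 j, (j <= k)%N & Ej j w] =
      \bigcup_(j in [set j | (j <= k)%N]) Ej j.
    by apply/seteqP; split => w [j jk Ejw]; exists j.
  by apply: bigcup_measurable => j _; exact: mEj.
pose i0 : 'I_n := Ordinal hn.
pose i1 : 'I_n := Ordinal n2.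
pose D := A i0 `&` B.
have mD : measurable D by exact: measurableI.
have [C [mC CB tC PC]] := tail_exists P spl X B D mX (ex_intro _ M hM) mB tB mD (@subIsetr _ _ _).
pose E := C `\` D.
pose F := D `\` C.
have mE : measurable E by rewrite /E; apply: measurableD.
have mF : measurable F by rewrite /F; apply: measurableD.
have PEF : fine (P E) = fine (P F).
  by rewrite /E /F !mu_D' // PC setIC.
pose Ej j := E `&` A (insubd i0 j.+1).
have mEj j : measurable (Ej j) by exact: measurableI.
have hsub : fine (P F) <= fine (P [set w | exists2 j, (j <= n.-2)%N & Ej j w]).
  rewrite -PEF; apply: mu_le => //; first exact: mU.
  move=> w [Cw nDw]; have [i Aiw] := covA w; have Bw := CB w Cw.
  have vi : val i != 0%N.
    apply/eqP => vi; apply: nDw; rewrite /D; have -> : i0 = i by apply: val_inj.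
    by split.
  have ltin : (val i < n)%N by exact: ltn_ord. have vi' : (0 < val i)%N by rewrite lt0n.
  exists (val i).-1; first lia.
  split; first by split.
  by rewrite prednK ?lt0n // valKd.
have [G [Gp Gc]] := multisplit P spl Ej mEj (n.-2) F mF hsub.
exists (fun i : 'I_n => if val i == 0%N then C else (A i `\` C) `|` G (val i).-1 `|` ~` B).
split.
- split.
  + move=> i; case: ifP => _ //.
    apply: measurableU; last exact: measurableC.
    apply: measurableU; first exact: measurableD.
    by case: (Gp (val i).-1).
  + move=> w; have [Cw|nCw] := pselect (C w).
      by exists i0; rewrite /= ?eqxx.
    have [Bw|nBw] := pselect (B w); last by exists i1; right.
    have [i Aiw] := covA w; have [vi0|vi0] := eqVneq (val i) 0%N.
      have Fw : F w.
        rewrite /F /D; split => //; split => //; have -> : i0 = i by apply: val_inj.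
        exact: Aiw.
      have [j jk Gjw] := Gc w Fw.
      have jn : (j.+1 < n)%N by lia.
      by exists (insubd i0 j.+1); rewrite /= val_insubd jn /=; left; right.
    by exists i; rewrite (negPf vi0); left; left.
- move=> i; case: (eqVneq (val i) 0%N) => vi.
  + have ii0 : i = i0 by apply: val_inj.
    apply: sup_le_trans (hA i) => Q PQ.
    have [f [df fdec]] := hdec i Q PQ vi.
    rewrite (setIidl CB) (muE Q _ mC) (muE Q _ (measurableI _ _ (mA i) mB)) lee_fin.
    rewrite ii0 -/D.
    have e1 : fine (Q C) = fine (Q (C `&` D)) + fine (Q E).
      by rewrite /E mu_D' // addrC subrK.
    have e2 : fine (Q D) = fine (Q (C `&` D)) + fine (Q F).
      by rewrite /F mu_D' // setIC addrC subrK.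
    rewrite e1 e2 lerD2l; apply: (dens_cmp _ _ _ _ _ df mE mF); last by rewrite PEF.
    by move=> e w [Ce _] [_ nCw]; apply: fdec; exact: tC Ce nCw.
  + rewrite /= ?(negPf vi); apply: sup_le_trans (hA i) => Q PQ.
    have [f [df finc]] := hinc i Q PQ (elimN eqP vi).
    set j := (val i).-1.
    have ij : insubd i0 j.+1 = i by rewrite /j prednK ?lt0n // valKd.
    have [mGj GjF PGj] := Gp j.
    have mAB : measurable (A i `&` B) by exact: measurableI.
    have mK : measurable ((A i `&` B) `\` C) by exact: measurableD.
    have mS : measurable (((A i `\` C) `|` G j `|` ~` B) `&` B).
      apply: measurableI => //; apply: measurableU; last exact: measurableC.
      by apply: measurableU => //; exact: measurableD.
    rewrite (muE Q _ mS) (muE Q _ mAB) lee_fin.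
    apply: (@le_trans _ _ (fine (Q (((A i `&` B) `\` C) `|` G j)))).
      apply: mu_le => //; first exact: measurableU.
      by move=> w [[[[Aw nCw]|Gw]|nBw] Bw] //; [left | right].
    apply: (le_trans (mu_U2 Q _ _ mK mGj)).
    apply: (@le_trans _ _ (fine (Q ((A i `&` B) `\` C)) + fine (Q (Ej j)))).
      rewrite lerD2l; apply: (dens_cmp _ _ _ _ _ df mGj (mEj j)) => // g e Gg [[Ce _] _].
      by apply: finc; apply: tC Ce _; case: (GjF g Gg).
    rewrite -mu_U //; last first.
      by apply/seteqP; split => // w [[_ nCw] [[Cw _] _]].
    apply: mu_le => //; first exact: measurableU.
    move=> w [[ABw _]|[[Cw _]]] //; rewrite ij => Aw; split => //.
    exact: CB.
- by move=> i vi; rewrite vi eqxx.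
Qed.
End mainsec.
Section equi.
Context {d : measure_display} {T : measurableType d} {R : realType}.

Lemma equi_mu (P : probability T R) m (e : 'I_m -> T) (e' : T -> 'I_m) :
  cancel e e' -> cancel e' e -> (forall A : set T, measurable A) ->
  (forall w, P [set w] = (m%:R^-1)%:E) ->
  forall A : set T, fine (P A) = #|finset (fun i : 'I_m => `[< A (e i) >])|%:R / m%:R.
Proof.
move=> ee' e'e mall Pw A.
have AE : A = \big[setU/set0]_(i < m | `[< A (e i) >]) [set e i].
  apply/seteqP; split => w.
    move=> Aw; rewrite (bigD1 (e' w)) /=; first by left; rewrite e'e.
    by apply/asboolP; rewrite e'e.
  by elim/big_rec: _ => [[]|i x /asboolP Aei IH [/= ->|/IH]].
have mF : forall i : 'I_m, measurable [set e i] by move=> i; exact: mall.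
have tF : trivIset setT (fun i => [set e i]).
  by move=> i j _ _ [w [/= -> /(congr1 e')]]; rewrite !ee'.
rewrite {1}AE measure_bigsetU_ord //.
rewrite (eq_bigr (fun=> (m%:R^-1)%:E)); last by move=> i _; exact: Pw.
rewrite sumEFin /=.
rewrite (eq_bigl (fun i : 'I_m => i \in finset (fun i : 'I_m => `[< A (e i) >]))); last by move=> i; rewrite inE.
by rewrite sumr_const [RHS]mulr_natl.
Qed.

Lemma equi_split (P : probability T R) : equiprobable P -> splittable P.
Proof.
case=> m [[e [e' ee' e'e]] mall Pw] S E _ _.
have muE' := equi_mu P m e e' ee' e'e mall Pw.
rewrite !muE' => hSE.
set IS := finset (fun i : 'I_m => `[< S (e i) >]); set IE := finset (fun i : 'I_m => `[< E (e i) >]).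
have hc : (#|IE| <= #|IS|)%N.
  have [m0|m0] := posnP m.
    by subst m; apply: leq_trans (max_card _) _; rewrite card_ord.
  by move: hSE; rewrite ler_pM2r ?invr_gt0 ?ltr0n // ler_nat.
pose GI := finset (fun x : 'I_m => x \in take #|IE| (enum IS)).
have cGI : #|GI| = #|IE|.
  have u : uniq (take #|IE| (enum IS)) by apply: take_uniq; exact: enum_uniq.
  rewrite cardsE; move/card_uniqP: u => ->.
  by rewrite size_take -cardE; case: ltnP => // h; apply/eqP; rewrite eqn_leq h hc.
have GIS : GI \subset IS.
  apply/fintype.subsetP => x; rewrite inE => /mem_take; by rewrite mem_enum.
exists [set w | e' w \in GI]; split => //.
  move=> w /= wG; have := fintype.subsetP GIS _ wG; rewrite inE e'e.
  by move/asboolP.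
rewrite muE' -cGI; congr (_%:R / _); apply: eq_card => i.
by rewrite [LHS]inE /= ee' asboolb.
Qed.
End equi.
Section atomless_sec.
Context {d : measure_display} {T : measurableType d} {R : realType}.

Lemma small_set (P : probability T R) : atomless P -> forall A : set T,
  measurable A -> 0 < fine (P A) -> forall dl : R, 0 < dl ->
  exists H, [/\ measurable H, H `<=` A, 0 < fine (P H) & fine (P H) <= dl].
Proof.
move=> hat A mA PA0 dl dl0.
have half k : exists H, [/\ measurable H, H `<=` A, 0 < fine (P H) &
    fine (P H) * 2 ^+ k <= fine (P A)].
  elim: k => [|k [H [mH HA PH0 PHk]]]; first by exists A; split; rewrite // expr0 mulr1.
  have PH0' : (0 < P H)%E by rewrite (muE P H mH) lte_fin.
  have [B [mB BH PB0 PBH]] := hat H mH PH0'.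
  move: PB0 PBH; rewrite (muE P B mB) (muE P H mH) !lte_fin => PB0 PBH.
  have [h|h] := lerP (fine (P B) * 2) (fine (P H)).
    exists B; split => //; first exact: subset_trans HA.
    by apply: le_trans PHk; rewrite exprS mulrA ler_wpM2r // exprn_ge0.
  exists (H `\` B); split => //.
  - exact: measurableD.
  - by move=> w [/HA].
  - by rewrite mu_D // subr_gt0.
  - apply: le_trans PHk; rewrite exprS mulrA ler_wpM2r ?exprn_ge0 // mu_D //.
    lra.
have [k hk] : exists k : nat, dl^-1 < k%:R.
  by eexists; apply: archi_boundP; rewrite invr_ge0 ltW.
have [H [mH HA PH0 PHk]] := half k.
exists H; split => //.
have k2 : k%:R <= 2 ^+ k :> R by rewrite -natrX ler_nat ltnW // ltn_expl.
have h1 : 1 <= dl * 2 ^+ k.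
  have : dl * dl^-1 <= dl * 2 ^+ k.
    by rewrite ler_pM2l //; apply: ltW; exact: lt_le_trans hk k2.
  by rewrite divff ?gt_eqF.
have : fine (P H) * 2 ^+ k <= dl * 2 ^+ k.
  exact: le_trans PHk (le_trans (mu_le1 _ _ mA) h1).
by rewrite ler_pM2r // exprn_gt0.
Qed.
End atomless_sec.
Section sierpinski.
Context {d : measure_display} {T : measurableType d} {R : realType}.

Lemma atomless_split (P : probability T R) : atomless P -> splittable P.
Proof.
move=> hat S E mS mE hES.
set q := fine (P E).
have q0 : 0 <= q := mu_ge0 _ _.
pose good (G : set T) := [/\ measurable G, G `<=` S & fine (P G) <= q].
pose cand (G H : set T) := [/\ measurable H, H `<=` S `\` G & fine (P H) <= q - fine (P G)].
have ex G : exists H, good G -> cand G H /\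
    (forall H', cand G H' -> fine (P H') <= 2 * fine (P H)).
  have [[mG GS PG]|ng] := pselect (good G); last by exists set0.
  pose V := [set fine (P H) | H in cand G].
  have c0 : cand G set0.
    by split => //; rewrite mu0 subr_ge0.
  have neV : V !=set0 by exists (fine (P set0)), set0.
  have ubV : ubound V 1 by move=> _ [H [mH _ _] <-]; exact: mu_le1.
  have hV : has_sup V by split => //; exists 1.
  set s := sup V.
  have sub H' : cand G H' -> fine (P H') <= s.
    by move=> cH; apply: sup_upper_bound => //; exists H'.
  have [s0|s0] := lerP s 0.
    exists set0 => _; split => // H' /sub h; rewrite mu0 mulr0; exact: le_trans h s0.
  have s2 : 0 < s / 2 by rewrite divr_gt0.
  have [_ [H cH <-] hH] := sup_adherent s2 hV.
  exists H => _; split => // H' /sub h.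
  apply: (le_trans h); move: hH; rewrite -/s => hH; lra.
have [h hh] := choice ex.
pose Gs n := iter n (fun G => G `|` h G) set0.
have goodG n : good (Gs n).
  elim: n => [|n [mG GS PG]]; first by split; rewrite /= ?mu0.
  have [[mH HSG PH] _] := hh _ (And3 mG GS PG).
  split => /=.
  - exact: measurableU.
  - by move=> w [/GS|/HSG []].
  - rewrite mu_U //; first by rewrite -lerBrDl.
    by apply/seteqP; split => // w [Gw /HSG [_]].
have GsS n : fine (P (Gs n.+1)) = fine (P (Gs n)) + fine (P (h (Gs n))).
  have [mG GS PG] := goodG n.
  have [[mH HSG PH] _] := hh _ (And3 mG GS PG).
  rewrite /= mu_U //.
  by apply/seteqP; split => // w [Gw /HSG [_]].
have mGs n : measurable (Gs n) by case: (goodG n).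
set G := \bigcup_n Gs n.
have mG : measurable G by exact: bigcupT_measurable.
have GS : G `<=` S by move=> w [n _]; case: (goodG n) => _ + _; apply.
have PG : fine (P G) <= q.
  apply: mu_bigcup_le => // n; first by move=> w Gw; left.
  by case: (goodG n).
exists G; split => //.
apply/eqP; rewrite eq_le PG /=; rewrite leNgt; apply/negP => Gq.
have PSG : 0 < fine (P (S `\` G)).
  rewrite mu_D // subr_gt0; exact: lt_le_trans Gq hES.
have dl0 : 0 < q - fine (P G) by rewrite subr_gt0.
have [H [mH HSG PH0 PHq]] := small_set P hat _ (measurableD mS mG) PSG _ dl0.
have hn n : fine (P H) <= 2 * fine (P (h (Gs n))).
  have [mGn GnS PGn] := goodG n.
  have [_ hmax] := hh _ (And3 mGn GnS PGn).
  apply: hmax; split => //.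
    by move=> w /HSG [Sw nGw]; split => // Gnw; apply: nGw; exists n.
  apply: (le_trans PHq); rewrite lerD2l lerN2; apply: mu_le => //.
  by move=> w Gnw; exists n.
have hk n : n%:R * fine (P H) <= 2 * fine (P (Gs n)).
  elim: n => [|n IH]; first by rewrite mul0r /= mu0 mulr0.
  by rewrite GsS mulrDr -addn1 natrD mulrDl mul1r; apply: lerD.
have [k hk'] : exists k : nat, 2 / fine (P H) < k%:R.
  by eexists; apply: archi_boundP; rewrite divr_ge0 // ltW.
rewrite ltr_pdivrMr // in hk'.
have := mu_le1 P _ (mGs k); move: (hk k) hk'.
lra.
Qed.
End sierpinski.

Theorem proposition8 (d : measure_display) (T : measurableType d) (R : realType)
  (P : probability T R) (n : nat) (hn : (0 < n)%N)
  (Ps : 'I_n -> set (probability T R)) (alpha : 'I_n -> R) (X : T -> R) :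
  atomless P \/ equiprobable P ->
  (forall i, Ps i !=set0) ->
  (forall i Q, Ps i Q -> Q `<< P) ->
  (forall i, 0 < alpha i < 1) ->
  bounded_mfun X ->
  (forall i Q, Ps i Q -> val i = 0%N -> density_decreasing_in P Q X) ->
  (forall i Q, Ps i Q -> val i <> 0%N -> density_increasing_in P Q X) ->
  let xstar := infconv (fun i => rhoVaR (Ps i) (alpha i)) X in
  (-oo < xstar)%E ->
  (exists A : 'I_n -> set T, Pi_n A /\
     forall i, (ereal_sup [set Q (A i `&` [set w | xstar < (X w)%:E]) | Q in Ps i]
                <= (alpha i)%:E)%E) ->
  exists A : 'I_n -> set T, [/\ Pi_n A,
     forall i, (ereal_sup [set Q (A i `&` [set w | xstar < (X w)%:E]) | Q in Ps i]
                <= (alpha i)%:E)%E &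
     forall i, val i = 0%N -> tail_event X (A i)].
Proof.
move=> hP _ _ _ hX hdec hinc xstar _ hA.
have spl : splittable P.
  by case: hP => [/atomless_split|/equi_split].
exact: (main_split P spl n hn Ps alpha X xstar hX hdec hinc hA).
Qed.
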